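(* Let $\gamma\in\{0\}\cup(0,\infty)\cup\{\infty\}$. There exists a maximizer $(q^*,{\rho^1}^*,{\rho^2}^* )$ of the dual problem $$\sup_{q\in S^n_\infty,\ \rho^1,\rho^2\in[0,\gamma]^n}\ \sum_{x\in V}\min_{i\in I}\Big(C_i(x)+(\mathrm{div}_wq_i)(x)+\rho_i^2-\rho_i^1\Big)+\sum_{i=1}^n(\rho_i^1S_i^\ell-\rho_i^2S_i^u).$$ For $x\in V$ let $I_m(x)=\arg\min_{i\in I}\big(C_i(x)+(\mathrm{div}_wq_i^* )(x)+{\rho_i^2}^*-{\rho_i^1}^*\big)$. Then there exists a solution $u^*$ of the relaxed primal problem (the convex relaxed problem with size information determined by $\gamma$ as in the context) such that $(u^*;q^*,{\rho^1}^*,{\rho^2}^* )$ is a primal-dual pair, and at each $x\in V$ any such $u^*$ satisfies $\sum_{i\in I_m(x)}u_i^*(x)=1$ and $u_j^*(x)=0$ for $j\notin I_m(x)$. If $I_m(x)$ is a single index $\{i_0\}$ at the point $x$, then $u^*_{i_0}(x)=1$ and $u^*_i(x)=0$ for $i\ne i_0$. If $I_m(x)$ is a singleton at every $x\in V$, then this $u^*$ (given by the indicator formula) is an exact global binary minimizer of the original non-convex problem $\min_{u\in\mathcal{B}}$ of the same energy (with the same size penalty or constraints).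
   Context: Let $G=(V,E)$ be a finite undirected graph with symmetric weights $w(x,y)=w(y,x)>0$ for $\{x,y\}\in E$ and $w(x,y)=0$ otherwise. $TV_w(v)=\frac12\sum_{x,y\in V}w(x,y)|v(y)-v(x)|$ for $v:V\to\mathbb{R}$. For $\phi:V\times V\to\mathbb{R}$, $(\mathrm{div}_w\phi)(x)=\frac12\sum_{y\in V}w(x,y)(\phi(x,y)-\phi(y,x))$, $\|\phi\|_\infty=\max_{x,y}|\phi(x,y)|$, and $S^n_\infty=\{(q_1,\dots,q_n):q_i:V\times V\to\mathbb{R},\|q_i\|_\infty\le1\}$. Let $n\ge2$, $I=\{1,\dots,n\}$, $C_i:V\to\mathbb{R}$ given; $\|u_i\|=\sum_xu_i(x)$; $\mathcal{B}=\{u:V\to\{0,1\}^n:\sum_iu_i(x)=1\ \forall x\}$, $\mathcal{B}'=\{u:V\to[0,1]^n:\sum_iu_i(x)=1\ \forall x\}$. Size bounds are integers $0\le S_i^\ell\le S_i^u$ with $\sum_iS_i^\ell\le|V|\le\sum_iS_i^u$; for $0<\gamma<\infty$, $P_\gamma(t)=0$ if $S_i^\ell\le t\le S_i^u$, $\gamma(t-S_i^u)$ if $t>S_i^u$, $\gamma(S_i^\ell-t)$ if $t<S_i^\ell$; $[0,\infty]$ means $[0,\infty)$. The relaxed primal problem is $\min_{u\in\mathcal{B}'}\sum_i\sum_xC_i(x)u_i(x)+\sum_iTV_w(u_i)$, with no size terms if $\gamma=0$, with $\sum_iP_\gamma(\|u_i\|)$ added if $0<\gamma<\infty$, and under constraints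 $S_i^\ell\le\|u_i\|\le S_i^u$ if $\gamma=\infty$; the original problem is the same with $\mathcal{B}'$ replaced by $\mathcal{B}$. A primal-dual pair means a saddle point, with $u$ ranging over $\mathcal{B}'$ and $(q,\rho^1,\rho^2)$ over $S^n_\infty\times[0,\gamma]^n\times[0,\gamma]^n$, of $E(u;q,\rho^1,\rho^2)=\sum_{i}\sum_{x}u_i(x)\big(C_i(x)+(\mathrm{div}_wq_i)(x)+\rho_i^2-\rho_i^1\big)+\sum_i(\rho_i^1S_i^\ell-\rho_i^2S_i^u)$. *)

(* Defs.v *)
From HB Require Import structures.
From mathcomp Require Import all_boot all_order all_algebra.
From mathcomp Require Import reals.
Set Implicit Arguments. Unset Strict Implicit. Unset Printing Implicit Defensive.
Import Order.TTheory GRing.Theory Num.Theory.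
Local Open Scope ring_scope.

Inductive gam (R : Type) := GZero | GFin of R | GInf.
Arguments GZero {R}. Arguments GInf {R}.

Definition gam_ok (R : realType) (g : gam R) : Prop :=
  match g with GFin c => 0 < c | _ => True end.

Section Defs.
Variables (R : realType) (V : finType) (n : nat).
Variable (w : V -> V -> R).

Definition TVw (v : V -> R) : R :=
  2^-1 * \sum_(x : V) \sum_(y : V) w x y * `|v y - v x|.

Definition divw (phi : V -> V -> R) (x : V) : R :=
  2^-1 * \sum_(y : V) w x y * (phi x y - phi y x).

Definition usize (v : V -> R) : R := \sum_(x : V) v x.

Definition in_Bprime (u : 'I_n -> V -> R) : Prop :=
  forall x, (forall i, 0 <= u i x <= 1) /\ \sum_(i < n) u i x = 1.

Definition in_B (u : 'I_n -> V -> R) : Prop :=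
  forall x, (forall i, u i x = 0 \/ u i x = 1) /\ \sum_(i < n) u i x = 1.

Definition in_Sinf (q : 'I_n -> V -> V -> R) : Prop :=
  forall i x y, `|q i x y| <= 1.

(* rho in [0,gamma]^n, with [0,oo] meaning [0,oo) *)
Definition in_box (g : gam R) (rho : 'I_n -> R) : Prop :=
  forall i, 0 <= rho i /\
    match g with GZero => rho i <= 0 | GFin c => rho i <= c | GInf => True end.

Variables (C : 'I_n -> V -> R) (Sl Su : 'I_n -> nat).

Definition Pgam (c : R) (i : 'I_n) (t : R) : R :=
  if (Su i)%:R < t then c * (t - (Su i)%:R)
  else if t < (Sl i)%:R then c * ((Sl i)%:R - t) else 0.

Definition size_admissible (g : gam R) (u : 'I_n -> V -> R) : Prop :=
  match g with
  | GInf => forall i, (Sl i)%:R <= usize (u i) <= (Su i)%:R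
  | _ => True
  end.

(* primal energy (size term depends on gamma; for oo it is a constraint) *)
Definition primal_energy (g : gam R) (u : 'I_n -> V -> R) : R :=
  \sum_(i < n) \sum_(x : V) C i x * u i x + \sum_(i < n) TVw (u i) +
  match g with GFin c => \sum_(i < n) Pgam c i (usize (u i)) | _ => 0 end.

Definition relaxed_min (g : gam R) (u : 'I_n -> V -> R) : Prop :=
  in_Bprime u /\ size_admissible g u /\
  forall u', in_Bprime u' -> size_admissible g u' ->
    primal_energy g u <= primal_energy g u'.

Definition binary_min (g : gam R) (u : 'I_n -> V -> R) : Prop :=
  in_B u /\ size_admissible g u /\
  forall u', in_B u' -> size_admissible g u' ->
    primal_energy g u <= primal_energy g u'.

Definition coef (q : 'I_n -> V -> V -> R) (r1 r2 : 'I_n -> R) (i : 'I_n) (x : V) : R :=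
  C i x + divw (q i) x + r2 i - r1 i.

(* minimum over i in I of f i (I nonempty since n >= 2) *)
Definition minI (f : 'I_n -> R) : R :=
  \big[Num.min/head 0 [seq f i | i <- enum 'I_n]]_(i < n) f i.

Definition dual_obj (q : 'I_n -> V -> V -> R) (r1 r2 : 'I_n -> R) : R :=
  \sum_(x : V) minI (fun i => coef q r1 r2 i x) +
  \sum_(i < n) (r1 i * (Sl i)%:R - r2 i * (Su i)%:R).

Definition dual_feas (g : gam R) (q : 'I_n -> V -> V -> R) (r1 r2 : 'I_n -> R) : Prop :=
  in_Sinf q /\ in_box g r1 /\ in_box g r2.

Definition dual_max (g : gam R) (q : 'I_n -> V -> V -> R) (r1 r2 : 'I_n -> R) : Prop :=
  dual_feas g q r1 r2 /\
  forall q' r1' r2', dual_feas g q' r1' r2' -> dual_obj q' r1' r2' <= dual_obj q r1 r2.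

Definition Elag (u : 'I_n -> V -> R) (q : 'I_n -> V -> V -> R) (r1 r2 : 'I_n -> R) : R :=
  \sum_(i < n) \sum_(x : V) u i x * coef q r1 r2 i x +
  \sum_(i < n) (r1 i * (Sl i)%:R - r2 i * (Su i)%:R).

Definition primal_dual_pair (g : gam R) (u : 'I_n -> V -> R)
    (q : 'I_n -> V -> V -> R) (r1 r2 : 'I_n -> R) : Prop :=
  in_Bprime u /\ dual_feas g q r1 r2 /\
  (forall u', in_Bprime u' -> Elag u q r1 r2 <= Elag u' q r1 r2) /\
  (forall q' r1' r2', dual_feas g q' r1' r2' -> Elag u q' r1' r2' <= Elag u q r1 r2).

Definition Iargmin (q : 'I_n -> V -> V -> R) (r1 r2 : 'I_n -> R) (x : V) : {set 'I_n} :=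
  [set i | [forall j, coef q r1 r2 i x <= coef q r1 r2 j x]].

End Defs.

(* Main.v *)
Require Import Defs.
From HB Require Import structures.
From mathcomp Require Import all_boot all_order all_algebra.
From mathcomp Require Import reals.
From mathcomp Require Import ring lra.
From Stdlib Require Import Classical.
Set Implicit Arguments. Unset Strict Implicit. Unset Printing Implicit Defensive.
Import Order.TTheory GRing.Theory Num.Theory.
Local Open Scope ring_scope.

Section Farkas.
Variable R : realFieldType.

Lemma sum_delta (I : finType) (c : I -> R) (i : I) : \sum_j (j == i)%:R * c j = c i.
Proof.
rewrite (bigD1 i) //= eqxx mul1r big1 ?addr0 // => j /negbTE ->; by rewrite mul0r.
Qed.

Lemma sep (I : finType) (P Q : pred I) (L U : I -> R) :
  (forall i j, P i -> Q j -> L i <= U j) ->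
  exists t, (forall i, P i -> L i <= t) /\ (forall j, Q j -> t <= U j).
Proof.
move=> H.
set m0 := \big[Num.min/0]_(j | Q j) U j.
have Hm0 : forall j, Q j -> m0 <= U j.
  by move=> j Qj; rewrite /m0 (bigD1 j) //= ge_min lexx.
exists (\big[Num.max/m0]_(i | P i) L i); split.
  by move=> i Pi; rewrite (bigD1 i) //= le_max lexx.
move=> j Qj; elim/big_ind: _ => [|x y hx hy|i Pi]; first exact: Hm0.
  by rewrite ge_max hx hy.
by apply: H.
Qed.

Section FM.
Variable X : finType.

Definition fm_stmt (S : {set X}) := forall (I : finType) (A : I -> X -> R) (b : I -> R),
  (forall i x, x \notin S -> A i x = 0) ->
  (forall z : X -> R, exists i, b i < \sum_x A i x * z x) ->
  exists y : I -> R, (forall i, 0 <= y i) /\ (forall x, \sum_i y i * A i x = 0)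
     /\ \sum_i y i * b i < 0.

Lemma fm_base : fm_stmt set0.
Proof.
move=> I A b HA Hz. have [i Hi] := Hz (fun _ => 0).
have Hi' : b i < 0 by move: Hi; rewrite big1 // => x _; rewrite mulr0.
exists (fun j => (j == i)%:R); split; first by move=> j; rewrite ler0n.
split; last by rewrite sum_delta.
move=> x; rewrite big1 // => j _; by rewrite HA ?in_set0 ?mulr0.
Qed.

Lemma fm_step (S : {set X}) (x0 : X) : x0 \in S -> fm_stmt (S :\ x0) -> fm_stmt S.
Proof.
move=> x0S IH I A b HA Hz.
pose a i := A i x0.
pose M (i' : (I + (I * I))%type) (i0 : I) : R :=
  match i' with
  | inl i => (a i == 0)%:R * (i0 == i)%:R
  | inr (p, q) => ((0 < a p) && (a q < 0))%:R * (- a q * (i0 == p)%:R + a p * (i0 == q)%:R)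
  end.
pose red (c : I -> R) i' := \sum_i0 M i' i0 * c i0.
have redl : forall c i, red c (inl i) = (a i == 0)%:R * c i.
  move=> c i; rewrite /red /=; under eq_bigr do rewrite -mulrA.
  by rewrite -mulr_sumr sum_delta.
have redr : forall c p q, red c (inr (p, q)) =
   ((0 < a p) && (a q < 0))%:R * (- a q * c p + a p * c q).
  move=> c p q; rewrite /red /=; under eq_bigr do rewrite -mulrA mulrDl -!mulrA.
  by rewrite -mulr_sumr big_split /= -!mulr_sumr !sum_delta.
have reda : forall i', red a i' = 0.
  case=> [i|[p q]]; first by rewrite redl; case: eqP => [->|]; rewrite ?mulr0 ?mul0r.
  by rewrite redr [a p * _]mulrC mulNr addNr mulr0.
have red_lin : forall (c : X -> I -> R) i', \sum_x red (c x) i' = red (fun i => \sum_x c x i) i'.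
  move=> c i'; rewrite /red exchange_big /=; apply: eq_bigr => i0 _.
  by rewrite mulr_sumr.
have red_comb : forall (y2 : (I + (I * I))%type -> R) (c : I -> R),
   \sum_i0 (\sum_i' y2 i' * M i' i0) * c i0 = \sum_i' y2 i' * red c i'.
  move=> y2 c; under eq_bigr do rewrite mulr_suml.
  rewrite exchange_big /=; apply: eq_bigr => i' _; rewrite /red mulr_sumr.
  by apply: eq_bigr => i0 _; rewrite mulrA.
pose A2 i' x := red (fun i => A i x) i'.
pose b2 := red b.
have HA2 : forall i' x, x \notin S :\ x0 -> A2 i' x = 0.
  move=> i' x; rewrite in_setD1 negb_and negbK => /orP [/eqP ->|xS].
    exact: reda.
  by rewrite /A2 /red big1 // => i0 _; rewrite HA // mulr0.
have Hz2 : forall z : X -> R, exists i', b2 i' < \sum_x A2 i' x * z x.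
  move=> v.
  case: (boolP [exists i', b2 i' < \sum_x A2 i' x * v x]) => [/existsP //|].
  rewrite negb_exists => /forallP Hv.
  have Hv' : forall i', red (fun i => \sum_x A i x * v x) i' <= b2 i'.
    move=> i'; move: (Hv i'); rewrite -leNgt => H.
    rewrite -red_lin; apply: le_trans H; rewrite le_eqVlt; apply/orP; left.
    apply/eqP; apply: eq_bigr => x _; rewrite /red mulr_suml.
    by apply: eq_bigr => i0 _; rewrite mulrA.
  pose rest i := \sum_x A i x * (if x == x0 then 0 else v x).
  have Hsplit : forall i t, \sum_x A i x * (if x == x0 then t else v x) = a i * t + rest i.
    move=> i t; rewrite /rest (bigD1 x0) //= eqxx [in RHS](bigD1 x0) //= eqxx mulr0 add0r.
    congr (_ + _); apply: eq_bigr => x /negbTE ->; done.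
  have Hrow : forall i', red rest i' <= red b i'.
    move=> i'; move: (Hv' i').
    have Hc : forall i, \sum_x A i x * v x = a i * v x0 + rest i.
      move=> i; rewrite -Hsplit; apply: eq_bigr => x _.
      by case: eqP => [->|].
    rewrite /red.
    under eq_bigr do rewrite Hc mulrDr mulrA [X in X + _]mulrC.
    rewrite big_split /= -mulr_sumr; move: (reda i'); rewrite /red => ->.
    by rewrite mulr0 add0r.
  have Hpair : forall q p, a q < 0 -> 0 < a p -> (b q - rest q) / a q <= (b p - rest p) / a p.
    move=> q p hq hp.
    move: (Hrow (inr (p, q))); rewrite !redr hp hq /= !mul1r => H.
    rewrite ler_ndivrMr // mulrAC ler_pdivrMr //.
    nra.
  have [t [Ht1 Ht2]] := @sep I (fun q => a q < 0) (fun p => 0 < a p)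
     (fun q => (b q - rest q) / a q) (fun p => (b p - rest p) / a p) Hpair.
  exfalso; have [i Hi] := Hz (fun x => if x == x0 then t else v x).
  move: Hi; rewrite Hsplit; apply/negP; rewrite -leNgt.
  case: (ltgtP (a i) 0) => hai.
  - move: (Ht1 i hai); rewrite ler_ndivrMr // => H; lra.
  - move: (Ht2 i hai); rewrite ler_pdivlMr // => H; lra.
  - move: (Hrow (inl i)); rewrite !redl hai eqxx !mul1r => H; lra.
have [y2 [Hy1 [Hy2 Hy3]]] := IH _ A2 b2 HA2 Hz2.
exists (fun i0 => \sum_i' y2 i' * M i' i0); split.
  move=> i0; apply: sumr_ge0 => i' _; apply: mulr_ge0 => //.
  case: i' => [i|[p q]] /=; first by rewrite mulr_ge0 ?ler0n.
  case: (boolP ((0 < a p) && (a q < 0))) => [/andP [hp hq]|]; last by rewrite mul0r.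
  rewrite mul1r addr_ge0 // mulr_ge0 ?ler0n //; last exact: ltW.
  by rewrite oppr_ge0 ltW.
split; last by rewrite (red_comb y2 b).
by move=> x; rewrite (red_comb y2 (fun i => A i x)); apply: Hy2.
Qed.

Lemma fm_all (S : {set X}) : fm_stmt S.
Proof.
have [k Hk] : exists k, #|S| = k by eauto.
elim: k S Hk => [|k IH] S Hk.
  by rewrite (cards0_eq Hk); exact: fm_base.
have : (0 < #|S|)%N by rewrite Hk.
rewrite card_gt0 => /set0Pn [x0 x0S].
apply: (fm_step x0S); apply: IH.
by move: Hk; rewrite (cardsD1 x0 S) x0S add1n => -[].
Qed.

End FM.

Definition affine (X : finType) (F : (X -> R) -> R) :=
  exists p : (X -> R) * R, forall z, F z = \sum_x p.1 x * z x + p.2.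

Lemma alt (X I K : finType) (F : I -> (X -> R) -> R) (G : K -> (X -> R) -> R) :
  (forall i, affine (F i)) -> (forall k, affine (G k)) ->
  (forall lam : I -> R, (forall i, 0 <= lam i) ->
     exists z, (forall k, G k z <= 0) /\ \sum_i lam i * F i z <= 0) ->
  exists z, (forall k, G k z <= 0) /\ (forall i, F i z <= 0).
Proof.
move=> hF hG H; apply: NNPP => Hno.
pose H2 (r : (I + K)%type) z := match r with inl i => F i z | inr k => G k z end.
have hH : forall r, affine (H2 r) by case=> [i|k]; [exact: hF | exact: hG].
have [co Hco] := fin_all_exists hH.
have Hz : forall z : X -> R, exists r, - (co r).2 < \sum_x (co r).1 x * z x.
  move=> z; case: (boolP [exists r, 0 < H2 r z]) => [/existsP [r Hr]|].
    by exists r; rewrite -subr_gt0 opprK -Hco.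
  rewrite negb_exists => /forallP Hr; exfalso; apply: Hno; exists z; split.
    by move=> k; move: (Hr (inr k)); rewrite -leNgt.
  by move=> i; move: (Hr (inl i)); rewrite -leNgt.
have [y [Hy1 [Hy2 Hy3]]] := @fm_all X setT _ (fun r x => (co r).1 x) (fun r => - (co r).2)
  (fun r x h => ltac:(by rewrite in_setT in h)) Hz.
have Hc : forall z, \sum_r y r * H2 r z = - \sum_r y r * - (co r).2.
  move=> z; under eq_bigr do rewrite Hco mulrDr.
  rewrite big_split /=; under eq_bigr do rewrite mulr_sumr.
  rewrite exchange_big /= big1 ?add0r.
    by rewrite -sumrN; apply: eq_bigr => r _; rewrite mulrN opprK.
  move=> x _; under eq_bigr do rewrite mulrA.
  by rewrite -mulr_suml Hy2 mul0r.
have [z [Hz1 Hz2]] := H (fun i => y (inl i)) (fun i => Hy1 (inl i)).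
have : 0 < \sum_r y r * H2 r z by rewrite Hc oppr_gt0.
rewrite big_sumType /=; apply/negP; rewrite -leNgt.
have H3 : \sum_k y (inr k) * G k z <= 0.
  by apply: sumr_le0 => k _; rewrite mulr_ge0_le0.
by have := lerD Hz2 H3; rewrite addr0.
Qed.

Section Aff.
Variable X : finType.
Implicit Types F G : (X -> R) -> R.

Lemma affC c : affine (fun _ : X -> R => c).
Proof. by exists (fun _ => 0, c) => z /=; rewrite big1 ?add0r // => x _; rewrite mul0r. Qed.

Lemma affV x0 : affine (fun z : X -> R => z x0).
Proof. by exists (fun x => (x == x0)%:R, 0) => z /=; rewrite sum_delta addr0. Qed.

Lemma affD F G : affine F -> affine G -> affine (fun z => F z + G z).
Proof.
move=> [p Hp] [q Hq]; exists (fun x => p.1 x + q.1 x, p.2 + q.2) => z /=.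
rewrite Hp Hq; under eq_bigr do rewrite mulrDl.
by rewrite big_split /=; ring.
Qed.

Lemma affMl c F : affine F -> affine (fun z => c * F z).
Proof.
move=> [p Hp]; exists (fun x => c * p.1 x, c * p.2) => z /=.
rewrite Hp mulrDr mulr_sumr; congr (_ + _); apply: eq_bigr => x _; by rewrite mulrA.
Qed.

Lemma aff_ext F G : (forall z, F z = G z) -> affine F -> affine G.
Proof. by move=> E [p Hp]; exists p => z; rewrite -E. Qed.

Lemma affMr c F : affine F -> affine (fun z => F z * c).
Proof. by move=> h; apply: (aff_ext _ (affMl c h)) => z; rewrite mulrC. Qed.

Lemma affN F : affine F -> affine (fun z => - F z).
Proof. by move=> h; apply: (aff_ext _ (affMl (-1) h)) => z; rewrite mulN1r. Qed.

Lemma affB F G : affine F -> affine G -> affine (fun z => F z - G z).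
Proof. by move=> h1 h2; apply: affD => //; apply: affN. Qed.

Lemma affS (J : finType) (F : J -> (X -> R) -> R) :
  (forall j, affine (F j)) -> affine (fun z => \sum_j F j z).
Proof.
move=> h; have [p Hp] := fin_all_exists h.
exists (fun x => \sum_j (p j).1 x, \sum_j (p j).2) => z /=.
under eq_bigr do rewrite Hp.
rewrite big_split /= exchange_big /=; congr (_ + _).
by apply: eq_bigr => x _; rewrite mulr_suml.
Qed.

End Aff.
End Farkas.


Section Basic.
Variables (R : realType) (V : finType) (n : nat) (w : V -> V -> R) (C : 'I_n -> V -> R)
  (Sl Su : 'I_n -> nat).
Hypotheses (hn : (0 < n)%N) (wsym : forall x y, w x y = w y x) (wpos : forall x y, 0 <= w x y).

Lemma minI_le (f : 'I_n -> R) i : minI f <= f i.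
Proof. by rewrite /minI (bigD1 i) //= ge_min lexx. Qed.

Lemma minI_ex (f : 'I_n -> R) : exists i, minI f = f i.
Proof.
rewrite /minI; elim/big_ind: _ => [|x y [i ->] [j ->]|i _]; last by exists i.
  case E: (enum 'I_n) => [|i s] /=; last by exists i.
  have := size_enum_ord n; rewrite E /= => h0; exfalso; move: hn; by rewrite -h0.
by rewrite /Num.min; case: ifP => _; [exists i | exists j].
Qed.

Lemma Elag_split u q r1 r2 : Elag w C Sl Su u q r1 r2 =
  \sum_i \sum_x C i x * u i x + \sum_i \sum_x u i x * divw w (q i) x +
  \sum_i (r2 i * (usize (u i) - (Su i)%:R) + r1 i * ((Sl i)%:R - usize (u i))).
Proof.
rewrite /Elag -!big_split /=; apply: eq_bigr => i _.
have -> : \sum_x u i x * coef w C q r1 r2 i x =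
   \sum_x C i x * u i x + \sum_x u i x * divw w (q i) x + (r2 i - r1 i) * usize (u i).
  rewrite /usize mulr_sumr -!big_split /=; apply: eq_bigr => x _; rewrite /coef; ring.
ring.
Qed.

Lemma divw_pair (u : V -> R) phi :
  \sum_x u x * divw w phi x = 2^-1 * \sum_x \sum_y w x y * (phi x y * (u x - u y)).
Proof.
rewrite /divw.
have -> : \sum_x u x * (2^-1 * \sum_y w x y * (phi x y - phi y x)) =
   2^-1 * (\sum_x \sum_y w x y * phi x y * u x - \sum_x \sum_y w x y * phi y x * u x).
  rewrite -sumrB mulr_sumr; apply: eq_bigr => x _.
  rewrite -sumrB mulrCA; congr (_ * _); rewrite mulr_sumr; apply: eq_bigr => y _; ring.
congr (_ * _).
have -> : \sum_x \sum_y w x y * phi y x * u x = \sum_x \sum_y w x y * phi x y * u y.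
  rewrite exchange_big /=; apply: eq_bigr => x _; apply: eq_bigr => y _.
  by rewrite wsym.
rewrite -sumrB; apply: eq_bigr => x _; rewrite -sumrB; apply: eq_bigr => y _; ring.
Qed.

Lemma divw_le_TV (u : V -> R) phi : (forall x y, `|phi x y| <= 1) ->
  \sum_x u x * divw w phi x <= TVw w u.
Proof.
move=> hp; rewrite divw_pair /TVw ler_wpM2l // ?invr_ge0 ?ler0n //.
apply: ler_sum => x _; apply: ler_sum => y _; apply: ler_wpM2l => //.
apply: le_trans (ler_norm _) _; rewrite normrM distrC.
by apply: ler_piMl.
Qed.

Definition qbest (u : V -> R) x y : R := if u y <= u x then 1 else -1.

Lemma divw_eq_TV (u : V -> R) : \sum_x u x * divw w (qbest u) x = TVw w u.
Proof.
rewrite divw_pair /TVw; congr (_ * _); apply: eq_bigr => x _; apply: eq_bigr => y _.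
congr (_ * _); rewrite /qbest distrC; case: ifP => h.
  by rewrite mul1r ger0_norm // subr_ge0.
by rewrite mulN1r ltr0_norm ?opprK // subr_lt0 ltNge h.
Qed.

Definition usig (s : {ffun V -> 'I_n}) : 'I_n -> V -> R := fun i x => (s x == i)%:R.

Lemma usig_B s : in_Bprime (usig s).
Proof.
move=> x; split.
  by move=> i; rewrite /usig; case: eqP => _; rewrite ?ler01 ?lexx.
by rewrite /usig (eq_bigr (fun i => (i == s x)%:R * 1)) ?sum_delta // => i _; rewrite eq_sym mulr1.
Qed.

Lemma Elag_sig s q r1 r2 : Elag w C Sl Su (usig s) q r1 r2 =
  \sum_x coef w C q r1 r2 (s x) x + \sum_i (r1 i * (Sl i)%:R - r2 i * (Su i)%:R).
Proof.
rewrite /Elag exchange_big /=; congr (_ + _); apply: eq_bigr => x _.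
by rewrite /usig (eq_bigr (fun i => (i == s x)%:R * coef w C q r1 r2 i x)) ?sum_delta // => i _; rewrite eq_sym.
Qed.

Lemma dual_le u q r1 r2 : in_Bprime u -> dual_obj w C Sl Su q r1 r2 <= Elag w C Sl Su u q r1 r2.
Proof.
move=> hu; rewrite /dual_obj /Elag lerD2r exchange_big /=.
apply: ler_sum => x _; have [hu1 hu2] := hu x.
rewrite -[minI _]mul1r -hu2 mulr_suml; apply: ler_sum => i _.
by apply: ler_wpM2l; [case/andP: (hu1 i) | apply: minI_le].
Qed.

Lemma dual_sig q r1 r2 : exists s, Elag w C Sl Su (usig s) q r1 r2 = dual_obj w C Sl Su q r1 r2.
Proof.
have [f Hf] := fin_all_exists (fun x => minI_ex (fun i => coef w C q r1 r2 i x)).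
exists [ffun x => f x]; rewrite Elag_sig /dual_obj; congr (_ + _).
by apply: eq_bigr => x _; rewrite ffunE Hf.
Qed.

End Basic.


Section Main.
Variables (R : realType) (V : finType) (n : nat) (w : V -> V -> R) (C : 'I_n -> V -> R)
  (Sl Su : 'I_n -> nat) (g : gam R).

Definition Xt := ('I_n * V + ('I_n * V * V + ('I_n + 'I_n + ('I_n * V * V + ('I_n + 'I_n)))))%type.

Definition enc (u : 'I_n -> V -> R) (q t : 'I_n -> V -> V -> R) (r1 r2 p1 p2 : 'I_n -> R) :
  Xt -> R := fun v => match v with
  | inl (i, x) => u i x
  | inr (inl (i, x, y)) => q i x y
  | inr (inr (inl (inl i))) => r1 i
  | inr (inr (inl (inr i))) => r2 i
  | inr (inr (inr (inl (i, x, y)))) => t i x y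
  | inr (inr (inr (inr (inl i)))) => p1 i
  | inr (inr (inr (inr (inr i)))) => p2 i
  end.

Definition uz (z : Xt -> R) i x := z (inl (i, x)).
Definition qz (z : Xt -> R) i x y := z (inr (inl (i, x, y))).
Definition r1z (z : Xt -> R) i := z (inr (inr (inl (inl i)))).
Definition r2z (z : Xt -> R) i := z (inr (inr (inl (inr i)))).
Definition tz (z : Xt -> R) i x y := z (inr (inr (inr (inl (i, x, y))))).
Definition p1z (z : Xt -> R) i := z (inr (inr (inr (inr (inl i))))).
Definition p2z (z : Xt -> R) i := z (inr (inr (inr (inr (inr i))))).

Definition cval : R := match g with GFin c => c | _ => 0 end.
Definition gi : R := match g with GInf => 1 | _ => 0 end.
Definition capr (r : R) : R := match g with GInf => 0 | _ => r - cval end.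

Definition Pobj (z : Xt -> R) : R :=
  \sum_i \sum_x C i x * uz z i x + \sum_i (2^-1 * \sum_x \sum_y w x y * tz z i x y)
  + cval * \sum_i (p1z z i + p2z z i).

Definition It := ({ffun V -> 'I_n} + ('I_n * bool))%type.

Definition Frow (r : It) (z : Xt -> R) : R :=
  match r with
  | inl s => Pobj z - Elag w C Sl Su (usig R s) (qz z) (r1z z) (r2z z)
  | inr (i, b) => gi * (if b then usize (uz z i) - (Su i)%:R else (Sl i)%:R - usize (uz z i))
  end.

Definition Kt := ('I_n * V + (V * bool + ('I_n * V * V * 'I_4 + 'I_n * 'I_8)))%type.

Definition Grow (k : Kt) (z : Xt -> R) : R :=
  match k with
  | inl (i, x) => - uz z i x
  | inr (inl (x, b)) => if b then \sum_i uz z i x - 1 else 1 - \sum_i uz z i x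
  | inr (inr (inl (i, x, y, j))) =>
      match nat_of_ord j with
      | 0 => qz z i x y - 1
      | 1 => - qz z i x y - 1
      | 2 => uz z i y - uz z i x - tz z i x y
      | _ => uz z i x - uz z i y - tz z i x y
      end
  | inr (inr (inr (i, j))) =>
      match nat_of_ord j with
      | 0 => - r1z z i
      | 1 => - r2z z i
      | 2 => capr (r1z z i)
      | 3 => capr (r2z z i)
      | 4 => - p1z z i
      | 5 => - p2z z i
      | 6 => (Sl i)%:R - usize (uz z i) - p1z z i
      | _ => usize (uz z i) - (Su i)%:R - p2z z i
      end
  end.

Ltac aff := repeat first [ apply: affC | apply: affV | apply: affD | apply: affB | apply: affN
  | apply: affMl | apply: affMr | apply: affS => ? ].

Lemma Frow_aff r : affine (Frow r).
Proof.
case: r => [s|[i b]] /=.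
  rewrite /Pobj /Elag /coef /divw /uz /tz /p1z /p2z /qz /r1z /r2z; aff.
rewrite /usize /uz; case: b; aff.
Qed.

Lemma Grow_aff k : affine (Grow k).
Proof.
rewrite /Grow /capr /usize /uz /tz /p1z /p2z /qz /r1z /r2z.
case: k => [[i x]|[[x b]|[[[[i x] y] j]|[i j]]]].
- aff.
- case: b; aff.
- case: j => -[|[|[|j]]] Hj; aff.
- case: g => [|c|]; case: j => -[|[|[|[|[|[|[|j]]]]]]] Hj; aff.
Qed.

Hypotheses (hn : (2 <= n)%N) (wsym : forall x y, w x y = w y x) (wpos : forall x y, 0 <= w x y)
  (hS : forall i, (Sl i <= Su i)%N)
  (hV : (\sum_(i < n) Sl i <= #|V| <= \sum_(i < n) Su i)%N) (hg : gam_ok g).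

Lemma cval_ge0 : 0 <= cval.
Proof. by move: hg; rewrite /cval; case: g => // c /ltW. Qed.

Lemma gi_ge0 : 0 <= gi.
Proof. by rewrite /gi; case: g. Qed.

Lemma Bprime_of (u : 'I_n -> V -> R) : (forall i x, 0 <= u i x) -> (forall x, \sum_i u i x = 1) ->
  in_Bprime u.
Proof.
move=> h0 h1 x; split => // i; rewrite h0 /= -(h1 x) (bigD1 i) //= lerDl.
by apply: sumr_ge0 => j _.
Qed.

Definition ord4 (m : nat) (h : (m < 4)%N) : 'I_4 := Ordinal h.
Definition ord8 (m : nat) (h : (m < 8)%N) : 'I_8 := Ordinal h.

Lemma Zprops z : (forall k, Grow k z <= 0) ->
  [/\ in_Bprime (uz z), dual_feas g (qz z) (r1z z) (r2z z),
      (forall i x y, `|uz z i y - uz z i x| <= tz z i x y) &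
      (forall i, [/\ 0 <= p1z z i, 0 <= p2z z i, (Sl i)%:R - usize (uz z i) <= p1z z i &
                     usize (uz z i) - (Su i)%:R <= p2z z i])].
Proof.
move=> H; split.
- apply: Bprime_of.
    by move=> i x; have := H (inl (i, x)); rewrite /= oppr_le0.
  move=> x; have := H (inr (inl (x, true))); have := H (inr (inl (x, false))) => /=.
  rewrite !subr_le0 => h1 h2; apply/eqP; rewrite eq_le h1 h2 //.
- split; [|split].
  + move=> i x y; have := H (inr (inr (inl (i, x, y, @ord4 0 isT))));
    have := H (inr (inr (inl (i, x, y, @ord4 1 isT)))) => /=.
    rewrite ler_norml !subr_le0 lerNl => -> ->; done.
  + move=> i; have := H (inr (inr (inr (i, @ord8 0 isT))));
    have := H (inr (inr (inr (i, @ord8 2 isT)))) => /=.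
    rewrite /capr /cval oppr_le0; case: g => [|c|] //=; rewrite ?subr0 ?subr_le0 => h1 h2 //.
  + move=> i; have := H (inr (inr (inr (i, @ord8 1 isT))));
    have := H (inr (inr (inr (i, @ord8 3 isT)))) => /=.
    rewrite /capr /cval oppr_le0; case: g => [|c|] //=; rewrite ?subr0 ?subr_le0 => h1 h2 //.
- move=> i x y; have := H (inr (inr (inl (i, x, y, @ord4 2 isT))));
  have := H (inr (inr (inl (i, x, y, @ord4 3 isT)))) => /=.
  rewrite !subr_le0 => h1 h2; rewrite ler_norml h2 andbT lerNl opprB //.
- move=> i; have := H (inr (inr (inr (i, @ord8 4 isT))));
  have := H (inr (inr (inr (i, @ord8 5 isT))));
  have := H (inr (inr (inr (i, @ord8 6 isT))));
  have := H (inr (inr (inr (i, @ord8 7 isT)))) => /=.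
  by rewrite !subr_le0 !oppr_le0 => h1 h2 h3 h4; split.
Qed.

Definition tb (u : 'I_n -> V -> R) i x y := `|u i y - u i x|.
Definition p1b (u : 'I_n -> V -> R) i := Num.max ((Sl i)%:R - usize (u i)) 0.
Definition p2b (u : 'I_n -> V -> R) i := Num.max (usize (u i) - (Su i)%:R) 0.
Definition mkz u q r1 r2 := enc u q (tb u) r1 r2 (p1b u) (p2b u).

Lemma mkz_ok u q r1 r2 : in_Bprime u -> dual_feas g q r1 r2 -> forall k, Grow k (mkz u q r1 r2) <= 0.
Proof.
move=> hu [hq [h1 h2]].
case=> [[i x]|[[x b]|[[[[i x] y] j]|[i j]]]] /=.
- by rewrite oppr_le0; case: (hu x) => /(_ i) /andP [].
- by case: (hu x) => _ h; case: b; rewrite /uz /= h subrr.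
- rewrite /uz /qz /tz /=; have := hq i x y; rewrite ler_norml => /andP [ha hb].
  case: j => -[|[|[|j]]] Hj /=; rewrite ?subr_le0 //.
  + by rewrite lerNl.
  + by rewrite /tb ler_norm.
  + by rewrite /tb distrC ler_norm.
- rewrite /uz /r1z /r2z /p1z /p2z /=.
  case: j => -[|[|[|[|[|[|[|j]]]]]]] Hj /=; rewrite ?subr_le0 ?oppr_le0.
  + by case: (h1 i).
  + by case: (h2 i).
  + by rewrite /capr /cval; case: (h1 i); case: g => [|c|] //= _; rewrite ?subr0 ?subr_le0.
  + by rewrite /capr /cval; case: (h2 i); case: g => [|c|] //= _; rewrite ?subr0 ?subr_le0.
  + by rewrite /p1b le_max lexx orbT.
  + by rewrite /p2b le_max lexx orbT.
  + by rewrite /p1b le_max lexx.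
  + by rewrite /p2b le_max lexx.
Qed.

Lemma Pobj_mkz u q r1 r2 : Pobj (mkz u q r1 r2) =
  \sum_i \sum_x C i x * u i x + \sum_i TVw w (u i) + cval * \sum_i (p1b u i + p2b u i).
Proof. by []. Qed.

Lemma usize_const (c : R) : usize (fun _ : V => c) = c * #|V|%:R.
Proof. by rewrite /usize sumr_const mulr_natr. Qed.

Lemma u0_ex : exists u0 : 'I_n -> V -> R, in_Bprime u0 /\
  forall i, (Sl i)%:R <= usize (u0 i) <= (Su i)%:R.
Proof.
have n0 : (0 < n)%N by apply: leq_trans hn.
case/andP: hV => hA hB.
have [HN|HN] := eqVneq #|V| 0%N.
  pose i0 : 'I_n := Ordinal n0.
  exists (fun i _ => (i == i0)%:R); split.
    apply: Bprime_of => [i x|x]; first by rewrite ler0n.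
    by rewrite (eq_bigr (fun i => (i == i0)%:R * 1)) ?sum_delta // => i _; rewrite mulr1.
  move=> i; rewrite usize_const HN mulr0 ler0n andbT lern0 -leqn0.
  have : (Sl i <= \sum_(j < n) Sl j)%N by rewrite (bigD1 i) //= leq_addr.
  by move/leq_trans/(_ hA); rewrite HN.
pose a i : R := (Sl i)%:R. pose b i : R := (Su i)%:R.
pose A := \sum_i a i. pose B := \sum_i b i. pose N : R := #|V|%:R.
have hAN : A <= N by rewrite /A /a -natr_sum ler_nat.
have hNB : N <= B by rewrite /B /b -natr_sum ler_nat.
have hab : forall i, a i <= b i by move=> i; rewrite ler_nat.
have hN : 0 < N by rewrite ltr0n lt0n.
pose th : R := if A < B then (N - A) / (B - A) else 0.
have hth0 : 0 <= th.
  rewrite /th; case: ifP => // hAB; apply: divr_ge0; rewrite subr_ge0 //; exact: ltW.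
have hth1 : th <= 1.
  rewrite /th; case: ifP => // hAB; rewrite ler_pdivrMr ?subr_gt0 // mul1r; lra.
have hthA : A + th * (B - A) = N.
  rewrite /th; case: ifP => hAB.
    by rewrite divfK; [lra | rewrite subr_eq0 gt_eqF].
  rewrite mul0r addr0; move/negbT: hAB; rewrite -leNgt => hAB; lra.
pose al i := (a i + th * (b i - a i)) / N.
exists (fun i _ => al i); split.
  apply: Bprime_of => [i x|x].
    apply: divr_ge0; last exact: ltW.
    apply: addr_ge0; first by rewrite ler0n.
    by apply: mulr_ge0 => //; rewrite subr_ge0.
  rewrite /al -mulr_suml big_split /= -mulr_sumr sumrB -/A -/B hthA mulfV //.
  by rewrite gt_eqF.
move=> i; rewrite usize_const /al -/N mulfVK ?gt_eqF //.
have := hab i; rewrite -/(a i) -/(b i) => h; apply/andP; split; nra.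
Qed.

Lemma Elag_comb (J : finType) (lam : J -> R) (uu : J -> 'I_n -> V -> R) q r1 r2 :
  \sum_j lam j != 0 ->
  \sum_j lam j * Elag w C Sl Su (uu j) q r1 r2 =
  (\sum_j lam j) * Elag w C Sl Su (fun i x => (\sum_j lam j)^-1 * \sum_j lam j * uu j i x) q r1 r2.
Proof.
set L := \sum_j lam j => hL; rewrite /Elag.
under eq_bigr do rewrite mulrDr.
rewrite big_split /= -mulr_suml mulrDr; congr (_ + _).
set c := coef w C q r1 r2.
have -> : L * (\sum_i \sum_x L^-1 * (\sum_j lam j * uu j i x) * c i x) =
    \sum_i \sum_x (\sum_j lam j * uu j i x) * c i x.
  rewrite mulr_sumr; apply: eq_bigr => i _; rewrite mulr_sumr; apply: eq_bigr => x _.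
  by rewrite !mulrA mulfV // mul1r.
under eq_bigr do rewrite mulr_sumr.
rewrite exchange_big /=; apply: eq_bigr => i _.
under eq_bigr do rewrite mulr_sumr.
rewrite exchange_big /=; apply: eq_bigr => x _.
by rewrite mulr_suml; apply: eq_bigr => j _; rewrite mulrA.
Qed.

Lemma sumF (lam : It -> R) z : \sum_r lam r * Frow r z =
  \sum_s lam (inl s) * (Pobj z - Elag w C Sl Su (usig R s) (qz z) (r1z z) (r2z z)) +
  gi * \sum_i (lam (inr (i, true)) * (usize (uz z i) - (Su i)%:R) +
                lam (inr (i, false)) * ((Sl i)%:R - usize (uz z i))).
Proof.
rewrite big_sumType /=; congr (_ + _).
rewrite (eq_bigr (fun p => lam (inr (p.1, p.2)) * Frow (inr (p.1, p.2)) z)); last by case.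
rewrite -(pair_big xpredT xpredT (fun i b => lam (inr (i, b)) * Frow (inr (i, b)) z)) /=.
rewrite mulr_sumr; apply: eq_bigr => i _; rewrite big_bool /=; ring.
Qed.

Lemma maxif (a c : R) : (if 0 < a then c else 0) * a = c * Num.max a 0.
Proof.
by case: ltP; rewrite ?mul0r ?mulr0.
Qed.

Lemma hyp_ok (lam : It -> R) : (forall r, 0 <= lam r) ->
  exists z, (forall k, Grow k z <= 0) /\ \sum_r lam r * Frow r z <= 0.
Proof.
move=> hl; set L := \sum_s lam (inl s).
have L0 : 0 <= L by apply: sumr_ge0 => s _.
have [u0 [hu0 hs0]] := u0_ex.
have feas0 : dual_feas g (fun (_ : 'I_n) (_ _ : V) => 0) (fun _ : 'I_n => 0) (fun _ : 'I_n => 0).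
  rewrite /dual_feas; split; first by move=> i x y; rewrite normr0 ler01.
  have hb : in_box g (fun _ : 'I_n => 0).
    move=> i; split => //; move: cval_ge0; rewrite /cval; case: g => //.
  exact: (conj hb hb).
case: (eqVneq L 0) => HL.
  exists (mkz u0 (fun (_ : 'I_n) (_ _ : V) => 0) (fun _ : 'I_n => 0) (fun _ : 'I_n => 0)); split; first exact: mkz_ok.
  have Hs := psumr_eq0P (fun s _ => hl (inl s)) HL.
  rewrite sumF big1 ?add0r; last by move=> s _; rewrite Hs // mul0r.
  apply: mulr_ge0_le0; first exact: gi_ge0.
  apply: sumr_le0 => i _; have /andP [h1 h2] := hs0 i.
  rewrite -[X in _ <= X](addr0 0); apply: lerD; apply: mulr_ge0_le0 => //; rewrite subr_le0 //.
pose ub i x := L^-1 * \sum_s lam (inl s) * usig R s i x.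
have hub : in_Bprime ub.
  apply: Bprime_of => [i x|x].
    apply: mulr_ge0; first by rewrite invr_ge0.
    by apply: sumr_ge0 => s _; apply: mulr_ge0 => //; rewrite ler0n.
  rewrite /ub -mulr_sumr exchange_big /=.
  under eq_bigr => s _ do rewrite -mulr_sumr (@usig_B R V n s x).2 mulr1.
  by rewrite mulVf.
pose qq i := qbest (ub i).
pose rr2 i := (if 0 < usize (ub i) - (Su i)%:R then cval else 0) + gi * (lam (inr (i, true)) / L).
pose rr1 i := (if 0 < (Sl i)%:R - usize (ub i) then cval else 0) + gi * (lam (inr (i, false)) / L).
have Lgt0 : 0 < L by rewrite lt_def HL L0.
have feas : dual_feas g qq rr1 rr2.
  rewrite /dual_feas; split.
    by move=> i x y; rewrite /qq /qbest; case: ifP => _; rewrite ?normrN normr1.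
  have hlL : forall r, 0 <= lam r / L by move=> r; rewrite divr_ge0 // ltW.
  split => i; rewrite /rr1 /rr2 /gi /cval; move: hg (hlL (inr (i, false))) (hlL (inr (i, true)));
    case: g => [|c|] //= hc hl1 hl2; rewrite ?mul0r ?addr0 ?mul1r;
    (try by case: ifP); (try by case: ifP => _; rewrite ?lexx ?ltW).
  - by rewrite addr_ge0 //; case: ifP.
  - by rewrite addr_ge0 //; case: ifP.
exists (mkz ub qq rr1 rr2); split; first exact: mkz_ok.
rewrite sumF.
set A := \sum_(i < n) _.
under eq_bigr do rewrite mulrBr.
rewrite sumrB -mulr_suml -/L.
rewrite (@Elag_comb _ (fun s => lam (inl s)) (fun s => usig R s)) -/L //.
rewrite -/ub Elag_split Pobj_mkz.
have HT : forall i, \sum_x ub i x * divw w (qz (mkz ub qq rr1 rr2) i) x = TVw w (ub i).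
  by move=> i; exact: divw_eq_TV.
rewrite (eq_bigr _ (fun i _ => HT i)).
have HS : \sum_i (r2z (mkz ub qq rr1 rr2) i * (usize (ub i) - (Su i)%:R) +
     r1z (mkz ub qq rr1 rr2) i * ((Sl i)%:R - usize (ub i))) =
   cval * \sum_i (p1b ub i + p2b ub i) + gi / L * A.
  rewrite /A mulr_sumr mulr_sumr -big_split /=; apply: eq_bigr => i _.
  rewrite /r1z /r2z /= /rr1 /rr2 !mulrDl !maxif /p1b /p2b; field.
  exact: HL.
rewrite HS.
set P0 := \sum_i \sum_x C i x * ub i x + \sum_i TVw w (ub i).
set S0 := cval * \sum_i (p1b ub i + p2b ub i).
have -> : L * (P0 + S0) - L * (P0 + (S0 + gi / L * A)) + gi * A = 0 by field.
done.
Qed.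

Let n0 : (0 < n)%N := ltnW hn.

Lemma weak u q r1 r2 : in_Bprime u -> size_admissible Sl Su g u -> dual_feas g q r1 r2 ->
  Elag w C Sl Su u q r1 r2 <= primal_energy w C Sl Su g u.
Proof.
move=> hu hs [hq [h1 h2]]; rewrite Elag_split /primal_energy.
apply: lerD; first apply: lerD => //.
  by apply: ler_sum => i _; apply: divw_le_TV => // x y; apply: hq.
move: hs h1 h2; rewrite /size_admissible /in_box; case: g => [|c|] hs h1 h2.
- apply: sumr_le0 => i _; have [a1 a2] := h1 i; have [b1 b2] := h2 i.
  have -> : r1 i = 0 by apply/eqP; rewrite eq_le a2 a1.
  have -> : r2 i = 0 by apply/eqP; rewrite eq_le b2 b1.
  by rewrite !mul0r addr0.
- apply: ler_sum => i _; have [a1 a2] := h1 i; have [b1 b2] := h2 i.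
  have hSi : (Sl i)%:R <= (Su i)%:R :> R by rewrite ler_nat.
  rewrite /Pgam; set t := usize (u i).
  case: ifP => H1; first nra.
  case: ifP => H2; first nra.
  move/negbT: H1; move/negbT: H2; rewrite -!leNgt => H2 H1; nra.
- apply: sumr_le0 => i _; have [a1 _] := h1 i; have [b1 _] := h2 i.
  have /andP [s1 s2] := hs i; nra.
Qed.

Lemma weak2 u q r1 r2 : in_Bprime u -> size_admissible Sl Su g u -> dual_feas g q r1 r2 ->
  dual_obj w C Sl Su q r1 r2 <= primal_energy w C Sl Su g u.
Proof. by move=> hu hs hd; apply: le_trans (dual_le _ _ _ _ _ _ _ hu) (weak hu hs hd). Qed.

Lemma extract z : (forall k, Grow k z <= 0) -> (forall r, Frow r z <= 0) ->
 [/\ in_Bprime (uz z), size_admissible Sl Su g (uz z), dual_feas g (qz z) (r1z z) (r2z z) &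
   primal_energy w C Sl Su g (uz z) <= dual_obj w C Sl Su (qz z) (r1z z) (r2z z)].
Proof.
move=> hG hF; have [hu hd ht hp] := Zprops hG.
have hsz : size_admissible Sl Su g (uz z).
  rewrite /size_admissible; case E: g => //; move=> i.
  have := hF (inr (i, true)); have := hF (inr (i, false)).
  by rewrite /= /gi E !mul1r !subr_le0 => -> ->.
split => //.
have [s Hs] := dual_sig w C Sl Su n0 (qz z) (r1z z) (r2z z).
have := hF (inl s); rewrite /= subr_le0 Hs => hP.
apply: le_trans hP.
rewrite /primal_energy /Pobj; apply: lerD; [apply: lerD => //|].
  apply: ler_sum => i _; rewrite /TVw; apply: ler_wpM2l; first by rewrite invr_ge0.
  apply: ler_sum => x _; apply: ler_sum => y _; apply: ler_wpM2l => //; exact: ht.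
move: hg; rewrite /cval; case: g => [|c|] hc.
- by rewrite mul0r.
- have hc' : 0 < c := hc.
  rewrite mulr_sumr; apply: ler_sum => i _; have [a1 a2 a3 a4] := hp i.
  rewrite /Pgam.
  case: ifP => H1; first nra.
  case: ifP => H2; first nra.
  nra.
- by rewrite mul0r.
Qed.

Lemma comp_slack u q r1 r2 : in_Bprime u ->
  Elag w C Sl Su u q r1 r2 <= dual_obj w C Sl Su q r1 r2 ->
  forall x j, j \notin Iargmin w C q r1 r2 x -> u j x = 0.
Proof.
move=> hu hE x j hj.
pose m x := minI (fun i => coef w C q r1 r2 i x).
have hdiff : Elag w C Sl Su u q r1 r2 - dual_obj w C Sl Su q r1 r2 =
    \sum_x \sum_i u i x * (coef w C q r1 r2 i x - m x).
  rewrite /Elag /dual_obj opprD addrACA subrr addr0 exchange_big -sumrB /=.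
  apply: eq_bigr => y _.
  rewrite [RHS](eq_bigr (fun i => u i y * coef w C q r1 r2 i y - u i y * m y)); last first.
    by move=> i _; rewrite mulrBr.
  by rewrite sumrB -mulr_suml (hu y).2 mul1r.
have hpos : forall y i, 0 <= u i y * (coef w C q r1 r2 i y - m y).
  move=> y i; apply: mulr_ge0; first by case/andP: ((hu y).1 i).
  by rewrite subr_ge0 /m minI_le.
have h0 : \sum_y \sum_i u i y * (coef w C q r1 r2 i y - m y) = 0.
  apply/eqP; rewrite eq_le; apply/andP; split; first by rewrite -hdiff subr_le0.
  by apply: sumr_ge0 => y _; apply: sumr_ge0 => i _.
have hx : \sum_i u i x * (coef w C q r1 r2 i x - m x) = 0.
  by apply: (psumr_eq0P _ h0) => // y _; apply: sumr_ge0 => i _.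
have hjx : u j x * (coef w C q r1 r2 j x - m x) = 0.
  by apply: (psumr_eq0P _ hx).
move: hj; rewrite inE negb_forall => /existsP [k]; rewrite -ltNge => hk.
move/eqP: hjx; rewrite mulf_eq0 => /orP [/eqP //|].
rewrite subr_eq0 => /eqP hm; exfalso.
rewrite hm in hk; have h : m x <= coef w C q r1 r2 k x by apply: minI_le.
by move: (lt_le_trans hk h); rewrite ltxx.
Qed.

End Main.

Unset Implicit Arguments.

Theorem theorem2 (R : realType) (V : finType) (n : nat)
  (w : V -> V -> R) (C : 'I_n -> V -> R) (Sl Su : 'I_n -> nat) (g : gam R) :
  (2 <= n)%N ->
  (forall x y, w x y = w y x) ->
  (forall x y, 0 <= w x y) ->
  (forall i, (Sl i <= Su i)%N) ->
  (\sum_(i < n) Sl i <= #|V| <= \sum_(i < n) Su i)%N ->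
  gam_ok g ->
  (exists q r1 r2, dual_max w C Sl Su g q r1 r2) /\
  forall q r1 r2, dual_max w C Sl Su g q r1 r2 ->
    (exists u, relaxed_min w C Sl Su g u /\ primal_dual_pair w C Sl Su g u q r1 r2) /\
    forall u, relaxed_min w C Sl Su g u -> primal_dual_pair w C Sl Su g u q r1 r2 ->
      (forall x, \sum_(i in Iargmin w C q r1 r2 x) u i x = 1 /\
                 (forall j, j \notin Iargmin w C q r1 r2 x -> u j x = 0)) /\
      (forall x i0, Iargmin w C q r1 r2 x = [set i0] ->
                    u i0 x = 1 /\ (forall i, i != i0 -> u i x = 0)) /\
      ((forall x, exists i0, Iargmin w C q r1 r2 x = [set i0]) ->
       binary_min w C Sl Su g u).
Proof.
move=> hn wsym wpos hS hV hg.
have n0 : (0 < n)%N := ltnW hn.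
have [z [hG hF]] := alt (Frow_aff w C Sl Su g) (Grow_aff Sl Su g) (hyp_ok C hn wsym hS hV hg).
have [hu hs hd hPD] := extract hn wpos hg hG hF.
set us := uz z in hu hs hd hPD; set qs := qz z in hd hPD;
set r1s := r1z z in hd hPD; set r2s := r2z z in hd hPD.
split.
  exists qs, r1s, r2s; split => // q' r1' r2' hd'.
  by apply: le_trans (weak2 C wsym wpos hS hu hs hd') hPD.
move=> q r1 r2 [hdq hmax].
have hDle : dual_obj w C Sl Su qs r1s r2s <= dual_obj w C Sl Su q r1 r2 := hmax _ _ _ hd.
have hPq : primal_energy w C Sl Su g us <= dual_obj w C Sl Su q r1 r2 := le_trans hPD hDle.
split.
  exists us; split.
    split => //; split => // u' hu' hs'.
    exact: le_trans hPq (weak2 C wsym wpos hS hu' hs' hdq).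
  split => //; split => //; split.
    move=> u' hu'; apply: le_trans (weak C wsym wpos hS hu hs hdq) _.
    by apply: le_trans hPq (dual_le w C Sl Su q r1 r2 hu').
  move=> q' r1' r2' hd'; apply: le_trans (weak C wsym wpos hS hu hs hd') _.
  by apply: le_trans hPq (dual_le w C Sl Su q r1 r2 hu).
move=> u [hu1 [hs1 hmin1]] [_ [_ [hE1 _]]].
have [s Hs] := dual_sig w C Sl Su n0 q r1 r2.
have hEle : Elag w C Sl Su u q r1 r2 <= dual_obj w C Sl Su q r1 r2.
  by rewrite -Hs; apply: hE1; apply: usig_B.
have hz := comp_slack hu1 hEle.
have part1 : forall x, \sum_(i in Iargmin w C q r1 r2 x) u i x = 1 /\
                 (forall j, j \notin Iargmin w C q r1 r2 x -> u j x = 0).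
  move=> x; split; last by move=> j; apply: hz.
  have := (hu1 x).2; rewrite (bigID (mem (Iargmin w C q r1 r2 x))) /=.
  by rewrite [X in _ + X]big1 ?addr0 // => j hj; apply: hz.
have part2 : forall x i0, Iargmin w C q r1 r2 x = [set i0] ->
                    u i0 x = 1 /\ (forall i, i != i0 -> u i x = 0).
  move=> x i0 hI; have [h1 h2] := part1 x; rewrite hI big_set1 in h1; split => //.
  by move=> i hi; apply: h2; rewrite hI in_set1.
split => //; split => // hall.
split; last split => //.
  move=> x; split; last exact: (hu1 x).2.
  move=> i; have [i0 hI] := hall x; have [h1 h2] := part2 x i0 hI.
  by case: (eqVneq i i0) => [->|hi]; [right | left; apply: h2].
move=> u' hB hs'; apply: hmin1 => //.
move=> x; have [h1 h2] := hB x; split => // i.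
by case: (h1 i) => ->; rewrite ?lexx ?ler01.
Qed.
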